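(* Let $\varphi(x)=\sum_{i\ge0}\gamma_ix^i\in\mathbb{K}[[x]]$ and let $k\ge1$ be an integer. Then $$\sum_{i=0}^m(-1)^i\binom{2m+2k-1}{m-i}\binom{m+i}{i}\gamma_{m+i-1}=0\quad\text{for each } m\ge1$$ if and only if $\varphi\in\mathcal{F}_{2k+1}$.
   Context: $\mathbb{K}\in\{\mathbb{Q},\mathbb{R},\mathbb{C}\}$. For $r\in\mathbb{Z}$, $\mathcal{F}_r$ denotes the space of $\varphi\in\mathbb{K}[[x]]$ with $\varphi(x/(x-1))=(1-x)^r\varphi(x)$. *)

(* Defs.v *)
From HB Require Import structures.
From mathcomp Require Import all_boot all_order all_algebra.
Set Implicit Arguments. Unset Strict Implicit. Unset Printing Implicit Defensive.
Import Order.TTheory GRing.Theory Num.Theory.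
Local Open Scope ring_scope.

Definition fps (K : numFieldType) := nat -> K.

Section FPS.
Variable K : numFieldType.

Definition fps_one : fps K := fun n => (n == 0%N)%:R.
Definition fps_x : fps K := fun n => (n == 1%N)%:R.
Definition fps_1mx : fps K := fun n => fps_one n - fps_x n.
(* 1/(1-x) = 1 + x + x^2 + ... *)
Definition fps_geom : fps K := fun _ => 1.
Definition fps_mul (f g : fps K) : fps K :=
  fun n => \sum_(i < n.+1) f i * g (n - i)%N.
Definition fps_pow (f : fps K) (i : nat) : fps K := iter i (fps_mul f) fps_one.
(* composition phi(psi) (meaningful when psi 0 = 0, since then psi^i has
   order >= i, so only i <= n contribute to the n-th coefficient) *)
Definition fps_comp (phi psi : fps K) : fps K :=
  fun n => \sum_(i < n.+1) phi i * fps_pow psi i n.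
(* x/(x-1) = -x/(1-x) = - (x + x^2 + x^3 + ...) *)
Definition fps_xdiv : fps K := fun n => if n == 0%N then 0 else -1.
Definition fps_1mx_powz (r : int) : fps K :=
  if (0 <= r)%R then fps_pow fps_1mx `|r|%N else fps_pow fps_geom `|r|%N.

(* phi \in F_r  :<=>  phi(x/(x-1)) = (1-x)^r phi(x) *)
Definition inF (r : int) (phi : fps K) : Prop :=
  forall n, fps_comp phi fps_xdiv n = fps_mul (fps_1mx_powz r) phi n.
End FPS.

(* Main.v *)
Require Import Defs.
From HB Require Import structures.
From mathcomp Require Import all_boot all_order all_algebra.
From mathcomp Require Import zify ring.
Import Order.TTheory GRing.Theory Num.Theory.
Local Open Scope ring_scope.

Set Implicit Arguments. Unset Strict Implicit. Unset Printing Implicit Defensive.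

Section Transfer.
Variable K : numFieldType.
Variable basis : nat -> fps K.
Hypothesis hb0 : forall e j, (j < e)%N -> basis e j = 0.
Hypothesis hbe : forall e, basis e e != 0.

Lemma transfer (P1 P2 : fps K -> Prop) (Q2 : nat -> fps K -> Prop) (B : nat -> nat) :
  (forall f g c, P1 f -> P1 g -> P1 (fun j => f j + c * g j)) ->
  (forall f g c, P2 f -> P2 g -> P2 (fun j => f j + c * g j)) ->
  (forall e, ~~ odd e -> P1 (basis e)) -> (forall e, ~~ odd e -> P2 (basis e)) ->
  (forall d o, P1 d -> odd o -> (forall j, (j < o)%N -> d j = 0) -> d o = 0) ->
  (forall f, P2 f <-> forall n, Q2 n f) ->
  (forall n f g, (forall j, (j <= B n)%N -> f j = g j) -> Q2 n f -> Q2 n g) ->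
  forall g, P1 g -> P2 g.
Proof.
move=> C1 C2 B1 B2 D1 E2 Loc g Pg.
have ex : forall M, exists g', [/\ P1 g', P2 g' & forall j, (j < M)%N -> ~~ odd j -> g' j = g j].
  elim=> [|M [g' [P1g P2g Hg]]].
    by exists (basis 0); split; [apply: B1|apply: B2|].

  case: (boolP (odd M)) => oM.
    exists g'; split => // j; rewrite ltnS leq_eqVlt => /orP [/eqP -> | ]; last exact: Hg.
    by rewrite oM.
  pose c := (g M - g' M) / basis M M.
  exists (fun j => g' j + c * basis M j); split.
  - by apply: C1 => //; apply: B1.
  - by apply: C2 => //; apply: B2.
  - move=> j; rewrite ltnS leq_eqVlt => /orP [/eqP -> | ljM] oj.
      by rewrite /c divfK // addrC subrK.
    by rewrite hb0 // mulr0 addr0 Hg.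
apply/E2 => n.
have [g' [P1g P2g Hg]] := ex (B n).+1.
have Pd : P1 (fun j => g j + (-1) * g' j) by apply: C1.
have Z : forall j, (j <= B n)%N -> g j + (-1) * g' j = 0.
  elim/ltn_ind=> j IH ljB.
  case: (boolP (odd j)) => oj.
    apply: (D1 _ j Pd oj) => i lij; apply: IH => //; exact: leq_trans (ltnW lij) ljB.
  by rewrite Hg // mulN1r subrr.
apply: (Loc n g' g); last by move/E2: P2g.
move=> j /Z /eqP; rewrite mulN1r subr_eq0 => /eqP ->. done.
Qed.
End Transfer.


Unset Implicit Arguments. Unset Printing Implicit Defensive.

Record eqm {K : numFieldType} (N : nat) (p q : {poly K}) : Prop := EqM { eqmP : forall j, (j < N)%N -> p`_j = q`_j }.
Arguments eqmP {K N p q} _ _ _.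
Arguments EqM {K N p q} _.

Section Poly.
Context {K : numFieldType}.
Implicit Types p q : {poly K}.

Definition tr (N : nat) (f : fps K) : {poly K} := \poly_(i < N) f i.

Lemma coef_tr {N} {f : fps K} {j} : (j < N)%N -> (tr N f)`_j = f j.
Proof. by move=> h; rewrite coef_poly h. Qed.

Lemma eqm_refl {N} {p} : eqm N p p. Proof. by constructor. Qed.
Lemma eqm_sym {N p q} : eqm N p q -> eqm N q p.
Proof. by move=> [h]; constructor => j hj; rewrite h. Qed.
Lemma eqm_trans {N p q r} : eqm N p q -> eqm N q r -> eqm N p r.
Proof. by move=> [h1] [h2]; constructor => j hj; rewrite h1 // h2. Qed.
Lemma eqm_eq {N p q} : p = q -> eqm N p q. Proof. by move->; constructor. Qed.

Lemma coefM_eq {n p q p' q'} : (forall j, (j <= n)%N -> p`_j = p'`_j) ->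
  (forall j, (j <= n)%N -> q`_j = q'`_j) -> (p * q)`_n = (p' * q')`_n.
Proof.
move=> hp hq; rewrite !coefM; apply: eq_bigr => j _.
by rewrite hp ?hq // ?leq_subr // -ltnS.
Qed.

Lemma eqm_mul {N p q p' q'} : eqm N p p' -> eqm N q q' -> eqm N (p * q) (p' * q').
Proof.
move=> [hp] [hq]; constructor => n hn; apply: coefM_eq => j hj.
  by apply: hp; exact: leq_ltn_trans hj hn.
by apply: hq; exact: leq_ltn_trans hj hn.
Qed.

Lemma eqm_exp {N p p'} i : eqm N p p' -> eqm N (p ^+ i) (p' ^+ i).
Proof. move=> h; elim: i => [|i IH]; first exact: eqm_refl.
by rewrite !exprS; apply: eqm_mul. Qed.

Lemma eqm_add {N p q p' q'} : eqm N p p' -> eqm N q q' -> eqm N (p + q) (p' + q').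
Proof. by move=> [hp] [hq]; constructor => j hj; rewrite !coefD hp ?hq. Qed.
Lemma eqm_sub {N p q p' q'} : eqm N p p' -> eqm N q q' -> eqm N (p - q) (p' - q').
Proof. by move=> [hp] [hq]; constructor => j hj; rewrite !coefB hp ?hq. Qed.

Lemma pow_zero {q i n} : q`_0 = 0 -> (n < i)%N -> (q ^+ i)`_n = 0.
Proof.
move=> q0; elim: i n => [//|i IH] n hn.
rewrite exprS coefM; apply: big1 => [[j hj]] _ /=.
case: j hj => [|j] hj; first by rewrite q0 mul0r.
rewrite IH ?mulr0 //.
lia.
Qed.

Lemma pow_diag {q} i : q`_0 = 0 -> (q ^+ i)`_i = (q`_1) ^+ i.
Proof.
move=> q0; elim: i => [|i IH]; first by rewrite !expr0 coef1.
rewrite exprS coefM big_ord_recl q0 mul0r add0r big_ord_recl /= subSS subn0 IH.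
rewrite big1 ?addr0 -?exprS // => [[j hj]] _ /=.
rewrite pow_zero ?mulr0 //.
rewrite /bump /=. lia.
Qed.

Lemma sum_widen {F : nat -> K} {A C} : (A <= C)%N -> (forall i, (A <= i)%N -> (i < C)%N -> F i = 0) ->
  \sum_(i < A) F i = \sum_(i < C) F i.
Proof.
move=> hAC hF; rewrite -!(big_mkord xpredT) (big_cat_nat (leq0n A) hAC) /=.
rewrite [X in _ = _ + X]big_nat_cond [X in _ = _ + X]big1 ?addr0 // => i /andP [/andP [h1 h2] _].
exact: hF.
Qed.

Lemma coef_comp {p q n} : q`_0 = 0 ->
  (p \Po q)`_n = \sum_(i < n.+1) p`_i * (q ^+ i)`_n.
Proof.
move=> q0; rewrite comp_polyE coef_sum.
under eq_bigr do rewrite coefZ.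
rewrite (sum_widen (F := fun i => p`_i * (q ^+ i)`_n) (leq_addr n.+1 (size p))); last first.
  by move=> i h1 h2; rewrite nth_default // mul0r.
rewrite [RHS](sum_widen (F := fun i => p`_i * (q ^+ i)`_n) (leq_addl (size p) n.+1)) //.
by move=> i h1 h2; rewrite pow_zero ?mulr0.
Qed.

Lemma eqm_comp {N p q p' q'} : q`_0 = 0 -> q'`_0 = 0 -> eqm N p p' -> eqm N q q' ->
  eqm N (p \Po q) (p' \Po q').
Proof.
move=> q0 q'0 [hp] hq; constructor => n hn; rewrite !coef_comp //; apply: eq_bigr => [[i hi]] _ /=.
have hiN : (i < N)%N by exact: leq_trans hi hn.
by rewrite hp // (eqmP (eqm_exp i hq) n).
Qed.

Lemma eqm_cancel {N} {c p : {poly K}} : c`_0 != 0 -> eqm N (c * p) 0 -> eqm N p 0.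
Proof.
move=> c0 [h]; constructor; elim/ltn_ind=> n IH hn.
move: (h n hn); rewrite coefM big_ord_recl subn0 coef0 big1 ?addr0.
  by move/eqP; rewrite mulf_eq0 (negbTE c0) /= => /eqP ->.
move=> [j hj] _ /=; rewrite IH ?coef0 ?mulr0 //.
  by rewrite /bump /=; lia.
by rewrite /bump /=; lia.
Qed.

Lemma fps_mul_tr {N} (f g : fps K) {n} : (n < N)%N -> fps_mul f g n = (tr N f * tr N g)`_n.
Proof.
move=> hn; rewrite coefM /fps_mul; apply: eq_bigr => [[j hj]] _ /=.
rewrite !coef_tr //; first by apply: leq_ltn_trans (leq_subr _ _) hn.
exact: leq_trans hj hn.
Qed.

Lemma fps_pow_tr {N} (f : fps K) i {n} : (n < N)%N -> fps_pow f i n = (tr N f ^+ i)`_n.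
Proof.
elim: i n => [|i IH] n hn; first by rewrite expr0 coef1.
rewrite exprS /fps_pow iterS -/(fps_pow f i) (fps_mul_tr _ _ hn).
apply: coefM_eq => // j hj.
have hjN : (j < N)%N by exact: leq_ltn_trans hj hn.
by rewrite coef_tr // IH.
Qed.

Lemma fps_comp_tr {N} (f g : fps K) {n} : (n < N)%N -> g 0%N = 0 ->
  fps_comp f g n = (tr N f \Po tr N g)`_n.
Proof.
move=> hn g0; rewrite coef_comp; last by rewrite coef_tr ?(leq_ltn_trans _ hn).
apply: eq_bigr => [[i hi]] _ /=.
have hiN : (i < N)%N by exact: leq_trans hi hn.
by rewrite coef_tr // (fps_pow_tr _ _ hn).
Qed.

End Poly.


Unset Implicit Arguments. Unset Printing Implicit Defensive.

Lemma hockey s n : (\sum_(i < n.+1) 'C(i + s - 1, i) = 'C(n + s, n))%N.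
Proof.
elim: n => [|n IH]; first by rewrite big_ord1 !bin0.
rewrite big_ord_recr /= IH.
have -> : (n.+1 + s - 1 = n + s)%N by lia.
by rewrite addSn binS addnC.
Qed.

Section InF.
Context {K : numFieldType}.

Lemma two_neq0 : (2 : K) != 0. Proof. by rewrite pnatr_eq0. Qed.

Definition W N : {poly K} := tr N (fun n => (2 ^+ n.+1)^-1).
Definition T2 : {poly K} := 2 - 'X.

Lemma eqm_T2W {N} : eqm N (T2 * W N) 1.
Proof.
constructor=> j hj; have hj' : (j.-1 < N)%N by lia.
rewrite /T2 mulrBl coefB mulr_natl coefMn coefXM coef1 !coef_tr //.
case: j hj hj' => [|j] hj hj' /=; first by rewrite subr0 expr1; field.
rewrite !exprS; field; exact: expf_neq0 two_neq0.
Qed.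

Lemma coef_Wpow {N} s {n} : (n < N)%N ->
  ((W N) ^+ s)`_n = ('C(n + s - 1, n))%:R / 2 ^+ (n + s).
Proof.
elim: s n => [|s IH] n hn.
  rewrite expr0 coef1 addn0; case: n hn => [|n] hn; first by rewrite expr0 invr1 mulr1.
  by rewrite bin_small ?mul0r //; lia.
rewrite exprSr coefM.
transitivity (\sum_(j < n.+1) ('C(j + s - 1, j))%:R / (2 : K) ^+ (n + s.+1)).
  apply: eq_bigr => [[j hj]] _ /=.
  rewrite IH; last by lia.
  rewrite coef_tr; last by lia.
  rewrite -mulrA -invfM -exprD.
  have -> : (j + s + (n - j).+1 = n + s.+1)%N by lia.
  by [].
rewrite -mulr_suml -natr_sum hockey.
by have -> : (n + s.+1 - 1 = n + s)%N by lia.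
Qed.


Definition phi (k e : nat) : fps K := fun j =>
  if (e <= j)%N then ('C(j + 2 * k, j - e))%:R / 2 ^+ j else 0.

Lemma eqm_phi N k e : eqm N (tr N (phi k e))
  ((2 ^+ (2 * k + 1))%:P * ('X^e * (W N) ^+ (2 * k + 1 + e))).
Proof.
constructor=> j hj; rewrite coef_tr // coefCM coefXnM /phi.
case: leqP => hej; last by rewrite mulr0.
rewrite coef_Wpow; last by lia.
have -> : (j - e + (2 * k + 1 + e) - 1 = j + 2 * k)%N by lia.
have -> : (j - e + (2 * k + 1 + e) = j + (2 * k + 1))%N by lia.
rewrite (exprD _ j); field; by apply/andP; split; apply: expf_neq0; exact: two_neq0.
Qed.

Lemma eqm_xdiv N : eqm N ((1 - 'X) * tr N (@fps_xdiv K)) (- 'X).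
Proof.
constructor=> j hj; rewrite mulrBl mul1r coefB coefXM coefN coefX coef_tr // /fps_xdiv.
case: j hj => [|[|j]] hj /=; first by rewrite subr0 oppr0.
  by rewrite coef_tr /= ?subr0 //; lia.
by rewrite coef_tr /= ?subrr ?oppr0 //; lia.
Qed.

Lemma eqm_1mx N : eqm N (tr N (@fps_1mx K)) (1 - 'X).
Proof. by constructor=> j hj; rewrite coef_tr // coefB coef1 coefX. Qed.

Lemma eqm_tr_pow N (f : fps K) i : eqm N (tr N (fps_pow f i)) (tr N f ^+ i).
Proof. by constructor=> j hj; rewrite coef_tr // (fps_pow_tr _ _ hj). Qed.


Lemma eqm_subr {N} {p q : {poly K}} : eqm N (p - q) 0 -> eqm N p q.
Proof. by move=> [h]; constructor=> j hj; move: (h j hj); rewrite coefB coef0 => /eqP; rewrite subr_eq0 => /eqP. Qed.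

Lemma powz_pos r : fps_1mx_powz K (Posz r) = fps_pow (@fps_1mx K) r.
Proof. by []. Qed.

Lemma basis_inF k e : ~~ odd e -> inF (2 * k + 1)%:Z (phi k e).
Proof.
move=> ev n; rewrite powz_pos.
set r := (2 * k + 1)%N.
have hn : (n < n.+1)%N by [].
rewrite (fps_comp_tr _ _ hn) // (fps_mul_tr _ _ hn).
set N := n.+1.
set Phi := tr N (phi k e). set Psi := tr N (@fps_xdiv K).
have Psi0 : Psi`_0 = 0 by rewrite coef_tr.
suff H : eqm N (Phi \Po Psi) ((1 - 'X) ^+ r * Phi).
  rewrite (eqmP H) //; apply: (eqmP (N:=N)) => //; apply: eqm_mul; last exact: eqm_refl.
  apply: eqm_sym; apply: eqm_trans (eqm_tr_pow _ _ _) _; exact: eqm_exp (eqm_1mx N).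
set s := (r + e)%N.
set c := (2 : K) ^+ r.
have c0 : (T2 ^+ s)`_0 != 0.
  by rewrite -horner_coef0 horner_exp /T2 !hornerE subr0 expf_neq0 // two_neq0.
apply: eqm_subr; apply: (eqm_cancel c0).
have S1 : eqm N (T2 ^+ s * Phi) (c%:P * 'X^e).
  apply: eqm_trans (eqm_mul (@eqm_refl _ N (T2 ^+ s)) (eqm_phi N k e)) _; rewrite -/r -/s -/c.
  have -> : T2 ^+ s * (c%:P * ('X^e * W N ^+ (2 * k + 1 + e))) = c%:P * 'X^e * (T2 * W N) ^+ s.
    by rewrite exprMn /s /r; ring.
  rewrite -[X in eqm _ _ X]mulr1 -(expr1n _ s).
  by apply: eqm_mul => //; apply: eqm_exp; apply: eqm_T2W.
have S2 : eqm N T2 ((1 - 'X) * (T2 \Po Psi)).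
  have -> : T2 \Po Psi = 2 - Psi by rewrite /T2 rmorphB /= comp_polyX rmorph_nat.
  apply: eqm_sym; rewrite mulrBr.
  apply: eqm_trans (eqm_sub (eqm_refl) (eqm_xdiv N)) _.
  by apply: eqm_eq; rewrite /T2; ring.
have S3 : eqm N (T2 ^+ s * (Phi \Po Psi)) (c%:P * ((1 - 'X) ^+ r * 'X^e)).
  apply: eqm_trans (eqm_mul (eqm_exp s S2) (eqm_refl)) _.
  rewrite exprMn -mulrA -rmorphXn -rmorphM /=.
  apply: eqm_trans (eqm_mul (eqm_refl) (eqm_comp Psi0 Psi0 S1 (eqm_refl))) _.
  rewrite rmorphM /= comp_polyC comp_Xn_poly.
  have -> : (1 - 'X) ^+ s * (c%:P * Psi ^+ e) = c%:P * (1 - 'X) ^+ r * ((1 - 'X) * Psi) ^+ e.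
    by rewrite exprMn /s exprD; ring.
  apply: eqm_trans (eqm_mul (eqm_refl) (eqm_exp e (eqm_xdiv N))) _.
  apply: eqm_eq; rewrite exprNn -signr_odd (negbTE ev) expr0 mul1r; ring.
have S4 : eqm N (T2 ^+ s * ((1 - 'X) ^+ r * Phi)) (c%:P * ((1 - 'X) ^+ r * 'X^e)).
  have -> : T2 ^+ s * ((1 - 'X) ^+ r * Phi) = (1 - 'X) ^+ r * (T2 ^+ s * Phi) by ring.
  apply: eqm_trans (eqm_mul (eqm_refl) S1) _.
  by apply: eqm_eq; ring.
rewrite mulrBr; apply: eqm_trans (eqm_sub S3 S4) _.
by apply: eqm_eq; rewrite subrr.
Qed.

End InF.


Unset Implicit Arguments. Unset Printing Implicit Defensive.

Section L.
Context {K : numFieldType}.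

Lemma sign_mul_coef (j : nat) (p : {poly K}) n : ((-1) ^+ j * p)`_n = (-1) ^+ j * p`_n.
Proof.
rewrite -signr_odd -[in RHS]signr_odd; case: (odd j); first by rewrite !expr1 !mulN1r coefN.
by rewrite !expr0 !mul1r.
Qed.

Lemma term_coef (i j c1 c2 m : nat) :
  (('X ^+ i *+ c1) * ((- 'X) ^+ j *+ c2) : {poly K})`_m =
  if (i + j == m)%N then (c1 * c2)%:R * (-1) ^+ j else 0.
Proof.
rewrite mulrnAl mulrnAr coefMn coefMn (exprNn ('X : {poly K})) mulrCA -exprD sign_mul_coef coefXn.
rewrite eq_sym; case: eqP => _; last by rewrite mulr0 !mul0rn.
by rewrite mulr1 -mulrnA mulr_natl mulnC.
Qed.

Lemma midcoef_zero a b m : (a + b = 2 * m)%N -> odd b ->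
  ((('X + 1) ^+ a * (1 - 'X) ^+ b) : {poly K})`_m = 0.
Proof.
move=> hab ob.
rewrite (addrC 1 (- ('X : {poly K}))) !exprD1n big_distrlr /= coef_sum.
under eq_bigr do rewrite coef_sum.
under eq_bigr do under eq_bigr do rewrite term_coef.
set S := (\sum_(i < a.+1) _).
have HS : S = - S.
  rewrite {1}/S (reindex_inj rev_ord_inj) /= -sumrN; apply: eq_bigr => [[i hi]] _ /=.
  rewrite (reindex_inj rev_ord_inj) /= -sumrN; apply: eq_bigr => [[j hj]] _ /=.
  rewrite !subSS.
  have -> : ((a - i) + (b - j) == m)%N = (i + j == m)%N.
    by apply/eqP/eqP; lia.
  case: eqP => _; last by rewrite oppr0.
  rewrite !bin_sub; [|lia|lia].
  rewrite -signr_odd -[in RHS]signr_odd oddB; last by lia.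
  by rewrite ob; case: (odd j); rewrite /= ?expr0 ?expr1 ?mulrN1 ?mulr1 ?opprK.
apply/eqP; move/eqP: HS; rewrite -subr_eq0 opprK -mulr2n mulrn_eq0 /=.
by [].
Qed.


Lemma coef_X1pow n m : ((('X + 1) ^+ n : {poly K}))`_m = ('C(n, m))%:R.
Proof.
rewrite exprD1n coef_sum.
under eq_bigr do rewrite coefMn coefXn.
transitivity (\sum_(i < n.+1 | i == m :> nat) (('C(n, i))%:R : K)).
  rewrite [RHS]big_mkcond /=; apply: eq_bigr => i _; rewrite eq_sym.
  by case: eqP => _; rewrite ?mul0rn.
rewrite (big_ord1_eq _ (fun i => (('C(n, i))%:R : K))).
by case: ltnP => h //; rewrite bin_small.
Qed.

Lemma sumC a b m :
  \sum_(l < b.+1) (-1) ^+ l * ('C(b, l))%:R * ('C(l + a, m))%:R / (2 : K) ^+ l =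
  ((('X + 1) ^+ a * (- (2^-1)%:P * ('X + 1) + 1) ^+ b : {poly K}))`_m.
Proof.
rewrite exprD1n mulr_sumr coef_sum; apply: eq_bigr => l _.
rewrite exprMn -polyCN -(rmorphXn polyC) /=.
rewrite [in RHS]mulrnAr [in RHS]mulrCA -exprD coefMn coefCM coef_X1pow addnC.
rewrite (exprNn (2^-1 : K)) exprVn -(mulr_natr _ 'C(b, l)); field.
exact: expf_neq0 two_neq0.
Qed.

Lemma factor_half a b :
  (('X + 1) ^+ a * (- (2^-1)%:P * ('X + 1) + 1) ^+ b : {poly K}) =
  ((2^-1) ^+ b)%:P * (('X + 1) ^+ a * (1 - 'X) ^+ b).
Proof.
have h : (1 : {poly K}) = (2^-1)%:P + (2^-1)%:P.
  by rewrite -polyCD -mulr2n -[2^-1 *+ 2]mulr_natr mulVf ?two_neq0.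
have -> : (- (2^-1)%:P * ('X + 1) + 1 : {poly K}) = (2^-1)%:P * (1 - 'X).
  by rewrite [X in _ + X]h; ring.
by rewrite exprMn rmorphXn; ring.
Qed.

Definition Lm (k m : nat) (g : fps K) : K :=
  \sum_(i < m.+1) (-1) ^+ i * ('C(2 * m + 2 * k - 1, m - i))%:R * ('C(m + i, i))%:R
     * g (m + i - 1)%N.

Lemma Lform k m g : (1 <= m)%N -> Lm k m g =
  \sum_(j < 2 * m) (-1) ^+ (j.+1 - m) * ('C(2 * m + 2 * k - 1, 2 * m - 1 - j))%:R
     * ('C(j.+1, m))%:R * g j.
Proof.
move=> hm.
pose F := fun j : nat => (-1) ^+ (j.+1 - m) * ('C(2 * m + 2 * k - 1, 2 * m - 1 - j))%:R
     * ('C(j.+1, m))%:R * g j : K.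
transitivity (\sum_(j < 2 * m) F j); last by [].
symmetry.
rewrite -(big_mkord xpredT F) (big_cat_nat (n := (m - 1)%N)) /=; [|lia|lia].
rewrite big_nat_cond big1 ?add0r; last first.
  move=> j /andP [/andP [_ hj] _]; rewrite /F (@bin_small j.+1 m) ?mulr0 ?mul0r //; lia.
rewrite -{1}(add0n (m - 1)%N) big_addn.
have -> : (2 * m - (m - 1) = m.+1)%N by lia.
rewrite big_mkord; apply: eq_bigr => [[i hi]] _ /=; rewrite /F.
have e1 : ((i + (m - 1)).+1 - m = i)%N by lia.
have e2 : (2 * m - 1 - (i + (m - 1)) = m - i)%N by lia.
have e3 : ((i + (m - 1)).+1 = m + i)%N by lia.
have e4 : (i + (m - 1) = m + i - 1)%N by lia.
by rewrite e1 e2 e3 e4 -(bin_sub (leq_addl m i)) addnK.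
Qed.

End L.

Lemma binC2 a x y : (y <= x)%N -> (x <= a)%N ->
  ('C(a, x) * 'C(x, y) = 'C(a, y) * 'C(a - y, x - y))%N.
Proof.
move=> hyx hxa.
have M0 : (0 < y`! * (x - y)`! * (a - x)`!)%N by rewrite !muln_gt0 !fact_gt0.
apply/eqP; rewrite -(eqn_pmul2r M0); apply/eqP.
transitivity a`!.
  rewrite -(bin_fact hxa) -(bin_fact hyx); ring.
have hya : (y <= a)%N by exact: leq_trans hyx hxa.
have hxy : (x - y <= a - y)%N by lia.
have -> : (a - x = (a - y) - (x - y))%N by lia.
rewrite -(bin_fact hya) -(bin_fact hxy); ring.
Qed.


Section L2.
Context {K : numFieldType}.

Lemma sign_aux l e m : ~~ odd e -> (m <= (l + e).+1)%N ->
  (-1) ^+ ((l + e).+1 - m) = (-1) ^+ m.+1 * (-1) ^+ l :> K.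
Proof.
move=> ev hm.
rewrite -signr_odd -[(-1) ^+ m.+1]signr_odd -[(-1) ^+ l]signr_odd -signr_addb.
rewrite oddB // !oddS oddD (negbTE ev).
by case: (odd l); case: (odd m).
Qed.

Lemma basis_L k m e : ~~ odd e -> (1 <= m)%N -> Lm k m (@phi K k e) = 0.
Proof.
move=> ev hm; rewrite Lform //.
case: (ltnP e (2 * m)) => he; last first.
  apply: big1 => [[j hj]] _ /=.
  have hje : (j < e)%N by lia.
  by rewrite /phi leqNgt hje /= mulr0.
set b := (2 * m - 1 - e)%N.
pose F := fun j : nat => (-1) ^+ (j.+1 - m) * ('C(2 * m + 2 * k - 1, 2 * m - 1 - j))%:R
     * ('C(j.+1, m))%:R * phi k e j : K.
transitivity (\sum_(j < 2 * m) F j); first by [].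
rewrite -(big_mkord xpredT F) (big_cat_nat (n := e)) /=; [|lia|lia].
rewrite big_nat_cond big1 ?add0r; last first.
  by move=> j /andP [/andP [_ hj] _]; rewrite /F /phi leqNgt hj /= mulr0.
rewrite -{1}(add0n e) big_addn.
have -> : (2 * m - e = b.+1)%N by lia.
rewrite big_mkord.
pose c0 : K := (-1) ^+ m.+1 * ('C(2 * m + 2 * k - 1, e + 2 * k))%:R / 2 ^+ e.
transitivity (c0 * \sum_(l < b.+1) (-1) ^+ l * ('C(b, l))%:R * ('C(l + e.+1, m))%:R
   / (2 : K) ^+ l).
  rewrite mulr_sumr; apply: eq_bigr => [[l hl]] _ /=; rewrite /F /phi leq_addl addnK addnS.
  have hb : ('C(2 * m + 2 * k - 1, 2 * m - 1 - (l + e)) * 'C(l + e + 2 * k, l)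
      = 'C(2 * m + 2 * k - 1, e + 2 * k) * 'C(b, l))%N.
    have E1 : 'C(2 * m + 2 * k - 1, 2 * m - 1 - (l + e)) = 'C(2 * m + 2 * k - 1, l + e + 2 * k).
      have hx : (l + e + 2 * k <= 2 * m + 2 * k - 1)%N by lia.
      by rewrite -(bin_sub hx); congr 'C(_, _); lia.
    have E2 : 'C(l + e + 2 * k, l) = 'C(l + e + 2 * k, e + 2 * k).
      have hy : (e + 2 * k <= l + e + 2 * k)%N by lia.
      by rewrite -(bin_sub hy); congr 'C(_, _); lia.
    rewrite E1 E2 binC2; [|lia|lia].
    by congr (_ * 'C(_, _))%N; lia.
  have hbK := congr1 (fun n => n%:R : K) hb; rewrite /= !natrM in hbK.
  case: (leqP m (l + e).+1) => hml; last first.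
    by rewrite -addnS (@bin_small (l + e.+1) m) ?addnS // !(mulr0, mul0r).
  rewrite sign_aux // -addnS.
  set C1 := ('C(2 * m + 2 * k - 1, 2 * m - 1 - (l + e)))%:R.
  set C2 := ('C(l + e + 2 * k, l))%:R.
  set Cm := ('C(l + e.+1, m))%:R.
  transitivity ((-1) ^+ m.+1 * (-1) ^+ l * Cm / (2 ^+ l * 2 ^+ e) * (C1 * C2)).
    by rewrite exprD; field; apply/andP; split; apply: expf_neq0; exact: two_neq0.
  rewrite hbK /c0; field; apply/andP; split; apply: expf_neq0; exact: two_neq0.
rewrite sumC factor_half coefCM midcoef_zero ?mulr0 ?mul0r //; first by lia.
have he2 : e = (e./2).*2 by rewrite -[LHS]odd_double_half (negbTE ev).
have -> : b = (m - 1 - e./2).*2.+1 by rewrite /b; lia.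
by rewrite oddS odd_double.
Qed.

End L2.


Unset Implicit Arguments. Unset Printing Implicit Defensive.

Section Fin.
Context {K : numFieldType}.

Lemma phi_lt k e j : (j < e)%N -> @phi K k e j = 0.
Proof. by move=> h; rewrite /phi leqNgt h. Qed.

Lemma phi_diag k e : @phi K k e e != 0.
Proof.
rewrite /phi leqnn subnn bin0 mul1r invr_eq0 expf_neq0 //; exact: two_neq0.
Qed.

Lemma Lm_lin k m (f g : fps K) c :
  Lm k m (fun j => f j + c * g j) = Lm k m f + c * Lm k m g.
Proof.
rewrite /Lm mulr_sumr -big_split /=; apply: eq_bigr => i _; ring.
Qed.

Lemma comp_lin (f g : fps K) c n :
  fps_comp (fun j => f j + c * g j) (fps_xdiv K) n =
  fps_comp f (fps_xdiv K) n + c * fps_comp g (fps_xdiv K) n.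
Proof.
rewrite /fps_comp mulr_sumr -big_split /=; apply: eq_bigr => i _; ring.
Qed.

Lemma mul_lin (h f g : fps K) c n :
  fps_mul h (fun j => f j + c * g j) n = fps_mul h f n + c * fps_mul h g n.
Proof.
rewrite /fps_mul mulr_sumr -big_split /=; apply: eq_bigr => i _; ring.
Qed.

Lemma fps_pow0 (f : fps K) i : fps_pow f i 0%N = (f 0%N) ^+ i.
Proof.
elim: i => [|i IH]; first by rewrite expr0.
by rewrite /fps_pow iterS -/(fps_pow f i) /fps_mul big_ord1 subn0 IH exprS.
Qed.

Lemma xdiv_diag o : (0 < o)%N -> fps_pow (fps_xdiv K) o o = (-1) ^+ o.
Proof.
move=> ho; rewrite (fps_pow_tr (N := o.+1)) // pow_diag ?coef_tr //.
Qed.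

Lemma inF_det k (d : fps K) o : inF (2 * k + 1)%:Z d -> odd o ->
  (forall j, (j < o)%N -> d j = 0) -> d o = 0.
Proof.
move=> hd oo hz; move: (hd o); rewrite powz_pos /fps_comp /fps_mul.
rewrite big_ord_recr big1 ?add0r /=; last by move=> [i hi] _ /=; rewrite hz ?mul0r.
rewrite big_ord_recl big1 ?addr0 /=; last first.
  by move=> [i hi] _ /=; rewrite hz ?mulr0 // /bump /=; lia.
have o0 : (0 < o)%N by case: o oo hz.
rewrite xdiv_diag // -signr_odd oo expr1 subn0 fps_pow0 /fps_1mx /fps_one /fps_x /= subr0 expr1n mul1r.
rewrite add0r mulrN1 => h.
have : d o *+ 2 == 0 by rewrite mulr2n -{1}h addNr.
by rewrite mulrn_eq0 /= => /eqP.
Qed.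

Lemma L_det k (d : fps K) o : (forall m, (1 <= m)%N -> Lm k m d = 0) -> odd o ->
  (forall j, (j < o)%N -> d j = 0) -> d o = 0.
Proof.
move=> hd oo hz.
have he : o = (o./2).*2.+1 by rewrite -[LHS]odd_double_half oo.
set m := (o./2).+1.
move: (hd m isT); rewrite /Lm big_ord_recr big1 ?add0r /=; last first.
  by move=> [i hi] _ /=; rewrite hz ?mulr0 //; rewrite /m; lia.
have -> : (m + m - 1 = o)%N by rewrite /m; lia.
rewrite subnn bin0 mulr1.
rewrite add0r => /eqP; rewrite !mulf_eq0 signr_eq0 /= pnatr_eq0 eqn0Ngt bin_gt0 leq_addr /=.
by move/eqP.
Qed.

End Fin.


Theorem lemma4p6 (K : numFieldType) (gamma : fps K) (k : nat) (hk : (1 <= k)%N) :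
  (forall m : nat, (1 <= m)%N ->
     \sum_(i < m.+1)
        (-1) ^+ i * ('C(2 * m + 2 * k - 1, m - i))%:R * ('C(m + i, i))%:R
        * gamma (m + i - 1)%N = 0)
  <-> inF (2 * k + 1)%:Z gamma.
Proof.
have hb0 : forall e j, (j < e)%N -> @phi K k e j = 0 by move=> e j h; exact: phi_lt.
have hbe : forall e, @phi K k e e != 0 by move=> e; exact: phi_diag.
have Llin : forall (f g : fps K) c, (forall m, (1 <= m)%N -> Lm k m f = 0) ->
    (forall m, (1 <= m)%N -> Lm k m g = 0) ->
    (forall m, (1 <= m)%N -> Lm k m (fun j => f j + c * g j) = 0).
  by move=> f g c hf hg m hm; rewrite Lm_lin hf // hg // mulr0 addr0.
have Flin : forall (f g : fps K) c, inF (2 * k + 1)%:Z f -> inF (2 * k + 1)%:Z g ->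
    inF (2 * k + 1)%:Z (fun j => f j + c * g j).
  by move=> f g c hf hg n; rewrite comp_lin mul_lin hf hg.
split => H.
- apply: (@transfer K (phi k) hb0 hbe (fun g => forall m, (1 <= m)%N -> Lm k m g = 0)
    (inF (2 * k + 1)%:Z)
    (fun n f => fps_comp f (fps_xdiv K) n = fps_mul (fps_1mx_powz K (2 * k + 1)%:Z) f n)
    id).
  + exact: Llin.
  + exact: Flin.
  + by move=> e ev m hm; exact: basis_L.
  + by move=> e ev; exact: basis_inF.
  + by move=> d o; exact: L_det.
  + by [].
  + move=> n f g hfg h.
    have e1 : fps_comp f (fps_xdiv K) n = fps_comp g (fps_xdiv K) n.
      by apply: eq_bigr => [[i hi]] _ /=; rewrite hfg.
    have e2 : fps_mul (fps_1mx_powz K (2 * k + 1)%:Z) f n =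
              fps_mul (fps_1mx_powz K (2 * k + 1)%:Z) g n.
      by apply: eq_bigr => [[i hi]] _ /=; rewrite hfg // leq_subr.
    by rewrite -e1 -e2.
  + exact: H.
- apply: (@transfer K (phi k) hb0 hbe (inF (2 * k + 1)%:Z)
    (fun g => forall m, (1 <= m)%N -> Lm k m g = 0)
    (fun m f => (1 <= m)%N -> Lm k m f = 0)
    (fun m => 2 * m)%N _ _ _ _ _ _ _ gamma H).
  + exact: Flin.
  + exact: Llin.
  + by move=> e ev; exact: basis_inF.
  + by move=> e ev m hm; exact: basis_L.
  + by move=> d o; exact: inF_det.
  + by [].
  + move=> m f g hfg h hm; rewrite -(h hm) /Lm; apply: eq_bigr => [[i hi]] _ /=.
    by rewrite hfg //; lia.
Qed.
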